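(* Let $G$ be an NC-spectrum graph with nodes $x_0,\dots,x_k,y_k,\dots,y_0$, and let $M$, $\mathrm{lce}$ and $\mathrm{dia}$ be as defined in the context. Given the values $\mathrm{lce}(z)$ and $\mathrm{dia}(z)$ for all nodes $z$ (each accessible in $O(1)$ time), any entry $M(i,j)$, $0\le i,j\le k$, can be computed in $O(1)$ time.
   Context: Fix a finite set $\mathcal{R}$ of positive reals (the amino acid masses). A real $m$ is an amino-acid mass sum if $m=r_1+\cdots+r_t$ for some $t\ge1$, $r_i\in\mathcal{R}$ (repetitions allowed). Given a peptide mass $W$ and $k$ ion masses $w_1,\dots,w_k$, the NC-spectrum graph $G=(V,E)$ has vertex set $V=\{N_0,\dots,N_k,C_0,\dots,C_k\}$ with coordinates $\mathrm{cord}(N_0)=0$, $\mathrm{cord}(C_0)=W-18$, $\mathrm{cord}(N_j)=w_j-1$, $\mathrm{cord}(C_j)=W-w_j$ ($1\le j\le k$); for $j\ge1$, $N_j,C_j$ are derived from the $j$-th ion. There is an edge from $u$ to $v$ ($E(u,v)=1$, else $0$) iff $u,v$ are not derived from the same ion, $\mathrm{cord}(u)<\mathrm{cord}(v)$, and $\mathrm{cord}(v)-\mathrm{cord}(u)$ is an amino-acid mass sum. The nodes are listed in increasing coordinate order as $x_0,\dots,x_k,y_k,\dots,y_0$, with $x_0=N_0$, $y_0=C_0$ and $\{x_j,y_j\}$ the pair derived from one ion ($j\ge1$); every edge goes from a node to a later node in this list. The table $M$: for $0\le i,j\le k$, $M(i,j)=1$ if there exist a directed path $L$ from $x_0$ to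 $x_i$ and a directed path $R$ from $y_j$ to $y_0$ (a path may be a single node) such that $L\cup R$ contains exactly one of $x_p$ and $y_p$ for every $1\le p\le\max(i,j)$, and $M(i,j)=0$ otherwise. For $0\le i\le k$: $\mathrm{lce}(x_i)=j-i$ where $j\ge i$ is the largest index with $E(x_i,x_{i+1})=\dots=E(x_{j-1},x_j)=1$ (so $j=k$ or $E(x_j,x_{j+1})=0$); $\mathrm{lce}(y_i)=i-j$ where $j\le i$ is the smallest index with $E(y_i,y_{i-1})=\dots=E(y_{j+1},y_j)=1$ (so $j=0$ or $E(y_j,y_{j-1})=0$). Also $\mathrm{dia}(x_j)=M(j,j-1)$ and $\mathrm{dia}(y_j)=M(j-1,j)$ for $0<j\le k$, and $\mathrm{dia}(x_0)=\mathrm{dia}(y_0)=1$. *)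

(* Defs.v *)
From mathcomp Require Import all_boot all_order all_algebra.
From mathcomp Require Import reals.
Set Implicit Arguments. Unset Strict Implicit. Unset Printing Implicit Defensive.
Import Order.TTheory GRing.Theory Num.Theory.
Local Open Scope ring_scope.

(* Nodes of the NC-spectrum graph, named by their position in the sorted
   listing x_0,...,x_k,y_k,...,y_0:  (false, i) = x_i,  (true, i) = y_i. *)
Definition node := (bool * nat)%type.
Definition xn (i : nat) : node := (false, i).
Definition yn (i : nat) : node := (true, i).
Definition ion (u : node) : nat := u.2.
Definition valid (k : nat) (u : node) : Prop := (ion u <= k)%N.
(* position in the listing x_0,...,x_k,y_k,...,y_0 *)
Definition pos (k : nat) (u : node) : nat :=
  if u.1 then (2 * k + 1 - u.2)%N else u.2.

Definition aa_sum (R : realType) (A : seq R) (m : R) : Prop :=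
  exists t : seq R, t != [::] /\ all (fun r => r \in A) t /\ m = \sum_(r <- t) r.

Definition cord (R : realType) (cx cy : nat -> R) (u : node) : R :=
  if u.1 then cy u.2 else cx u.2.

(* x_j, y_j (j >= 1) are derived from the same (j-th) ion; x_0 = N_0, y_0 = C_0 are not *)
Definition same_ion (u v : node) : Prop := ion u = ion v /\ (1 <= ion u)%N.

Definition edge (R : realType) (A : seq R) (k : nat) (cx cy : nat -> R)
  (u v : node) : Prop :=
  valid k u /\ valid k v /\ ~ same_ion u v /\
  cord cx cy u < cord cx cy v /\ aa_sum A (cord cx cy v - cord cx cy u).

Fixpoint is_path (E : node -> node -> Prop) (u : node) (s : seq node) : Prop :=
  match s with
  | [::] => True
  | v :: s' => E u v /\ is_path E v s'
  end.

Definition Mtab (E : node -> node -> Prop) (i j : nat) : Prop :=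
  exists sL sR : seq node,
    is_path E (xn 0) sL /\ last (xn 0) sL = xn i /\
    is_path E (yn j) sR /\ last (yn j) sR = yn 0 /\
    let U := (xn 0 :: sL) ++ (yn j :: sR) in
    forall p : nat, (1 <= p <= maxn i j)%N -> (xn p \in U) != (yn p \in U).

Definition lce_spec (E : node -> node -> Prop) (k : nat) (z : node) (n : nat) : Prop :=
  let i := z.2 in
  if z.1 then
    (n <= i)%N /\ (forall m, (m < n)%N -> E (yn (i - m)) (yn (i - m - 1))) /\
    ((i - n = 0)%N \/ ~ E (yn (i - n)) (yn (i - n - 1)))
  else
    (i + n <= k)%N /\ (forall m, (m < n)%N -> E (xn (i + m)) (xn (i + m + 1))) /\
    ((i + n = k)%N \/ ~ E (xn (i + n)) (xn (i + n + 1))).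

Definition dia_spec (E : node -> node -> Prop) (z : node) (b : bool) : Prop :=
  let j := z.2 in
  if j == 0%N then b = true
  else if z.1 then (b <-> Mtab E (j - 1) j) else (b <-> Mtab E j (j - 1)).

(* Main.v *)
Require Import Defs.
From mathcomp Require Import all_boot all_order all_algebra.
From mathcomp Require Import reals.
From mathcomp Require Import zify.
Import Order.TTheory GRing.Theory Num.Theory.
Set Implicit Arguments. Unset Strict Implicit. Unset Printing Implicit Defensive.

Section Core.
Variable k : nat.
Variable E : node -> node -> Prop.
Hypothesis HE : forall u v, E u v -> [/\ valid k u, valid k v & (pos k u < pos k v)%N].

Lemma path_last u s : is_path E u s -> (pos k u <= pos k (last u s))%N.
Proof.
elim: s u => [|h s IH] u //= [Euh Ph].
have [_ _ L] := HE Euh. have := IH h Ph. lia.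
Qed.

Lemma path_range u s v : is_path E u s -> valid k u -> v \in u :: s ->
  [/\ valid k v, (pos k u <= pos k v)%N & (pos k v <= pos k (last u s))%N].
Proof.
elim: s u => [|h s IH] u /=.
  by move=> _ Vu; rewrite inE => /eqP ->.
move=> [Euh Ph] Vu; rewrite in_cons => /orP [/eqP -> | vs].
  by split => //; have := path_last Ph; have [_ _ L] := HE Euh; lia.
have [_ Vh L] := HE Euh.
have [Vv L1 L2] := IH h Ph Vh vs. split => //; lia.
Qed.

Lemma pos_inj u v : valid k u -> valid k v -> pos k u = pos k v -> u = v.
Proof.
case: u => [[] a]; case: v => [[] b]; rewrite /valid /pos /ion /= => Ha Hb H;
  try (by congr pair; lia); exfalso; lia.
Qed.

Lemma path_adj u s v w : valid k u -> is_path E u s -> v \in u :: s -> w \in u :: s ->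
  pos k w = (pos k v).+1 -> E v w.
Proof.
elim: s u => [|h s IH] u Vu.
  by move=> _; rewrite !inE => /eqP -> /eqP ->; lia.
move=> /= [Euh Ph]; have [_ Vh L] := HE Euh.
rewrite (in_cons u) => /orP [/eqP -> | vs].
  rewrite in_cons => /orP [/eqP -> | ws]; first lia.
  move=> Hp.
  have [Vw L1 L2] := path_range Ph Vh ws.
  have <- // : h = w by apply: pos_inj => //; lia.
rewrite in_cons => /orP [/eqP -> | ws].
  have [_ L1 _] := path_range Ph Vh vs. lia.
exact: (IH h Vh Ph vs ws).
Qed.

Lemma is_path_cat u s1 s2 : is_path E u (s1 ++ s2) <-> is_path E u s1 /\ is_path E (last u s1) s2.
Proof.
elim: s1 u => [|h s IH] u /=; first tauto.
rewrite IH; tauto.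
Qed.

Fixpoint chx a n := if n is n'.+1 then xn a.+1 :: chx a.+1 n' else [::].
Fixpoint chy a n := if n is n'.+1 then yn a.-1 :: chy a.-1 n' else [::].

Lemma chx_path a n : (forall m, (m < n)%N -> E (xn (a+m)) (xn (a+m+1))) -> is_path E (xn a) (chx a n).
Proof.
elim: n a => [|n IH] a H //=. split.
  by have := H 0%N isT; rewrite addn0 addn1.
apply: IH => m Hm. have := H m.+1 ltac:(lia).
by have -> : (a.+1 + m = a + m.+1)%N by lia.
Qed.

Lemma chx_last a n : last (xn a) (chx a n) = xn (a + n).
Proof. by elim: n a => [|n IH] a /=; rewrite ?addn0 // IH addSnnS. Qed.

Lemma chx_memx a n p : (xn p \in chx a n) = (a < p <= a + n)%N.
Proof.
elim: n a => [|n IH] a /=; first by rewrite in_nil; apply/esym/negbTE; lia.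
rewrite in_cons IH.
case: (p =P a.+1) => [->|ne]; rewrite ?eqxx /=; [|have -> : (xn p == xn a.+1) = false by apply/eqP => -[]];
  apply/esym; [apply/idP|]; lia.
Qed.

Lemma chx_memy a n p : (yn p \in chx a n) = false.
Proof. by elim: n a => [|n IH] a //=; rewrite in_cons IH. Qed.

Lemma chy_path a n : (n <= a)%N -> (forall m, (m < n)%N -> E (yn (a-m)) (yn (a-m-1))) -> is_path E (yn a) (chy a n).
Proof.
elim: n a => [|n IH] a Hn H //=. split.
  by have := H 0%N isT; rewrite subn0 subn1.
apply: IH => [|m Hm]; first lia. have := H m.+1 ltac:(lia).
by have -> : (a - m.+1 = a.-1 - m)%N by lia.
Qed.

Lemma chy_last a n : last (yn a) (chy a n) = yn (a - n).
Proof. by elim: n a => [|n IH] a /=; rewrite ?subn0 // IH; congr yn; lia. Qed.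

Lemma chy_memy a n p : (n <= a)%N -> (yn p \in chy a n) = (a - n <= p < a)%N.
Proof.
elim: n a => [|n IH] a Hn /=; first by rewrite in_nil; apply/esym/negbTE; lia.
rewrite in_cons IH; last lia.
case: (p =P a.-1) => [->|ne]; rewrite ?eqxx /=; [|have -> : (yn p == yn a.-1) = false by apply/eqP => -[]];
  apply/esym; [apply/idP|]; lia.
Qed.

Lemma chy_memx a n p : (xn p \in chy a n) = false.
Proof. by elim: n a => [|n IH] a //=; rewrite in_cons IH. Qed.

Lemma path_gt u s v : is_path E u s -> v \in s -> (pos k u < pos k v)%N.
Proof.
case: s => [|h s] //= [Euh Ph] Hv. have [_ Vh L] := HE Euh.
have [_ H _] := path_range Ph Vh Hv. lia.
Qed.

Lemma posx a : pos k (xn a) = a. Proof. by []. Qed.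
Lemma posy a : pos k (yn a) = (2 * k + 1 - a)%N. Proof. by []. Qed.
Lemma V0 : valid k (xn 0). Proof. by rewrite /valid /ion /=. Qed.

Lemma M00 : Mtab E 0 0.
Proof. exists [::], [::]; do 4 split => //. move=> U p; lia. Qed.

Lemma Mii i : (1 <= i)%N -> ~ Mtab E i i.
Proof.
move=> Hi [sL [sR [PL [LL [PR [LR C]]]]]].
have := C i ltac:(lia). rewrite !mem_cat -LL mem_last.
by rewrite (mem_head (yn i)) !orbT.
Qed.

Lemma Mgt i j : (j < i <= k)%N -> Mtab E i j <->
  Mtab E j.+1 j /\ (forall m, (m < i - j.+1)%N -> E (xn (j.+1+m)) (xn (j.+1+m+1))).
Proof.
move=> Hij.
have Vj : valid k (yn j) by rewrite /valid/ion/=; lia.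
split.
- move=> [sL [sR [PL [LL [PR [LR C]]]]]].
  have RL v : v \in xn 0 :: sL -> (pos k v <= i)%N.
    by move=> Hv; have [_ _ ] := path_range PL V0 Hv; rewrite LL.
  have RR v : v \in yn j :: sR -> (2*k+1-j <= pos k v)%N.
    by move=> Hv; have [_ H _] := path_range PR Vj Hv; rewrite /pos /= in H.
  have inL p : (j < p <= i)%N -> xn p \in xn 0 :: sL.
    move=> Hp. have := C p ltac:(lia). rewrite !mem_cat.
    have -> : (yn p \in xn 0 :: sL) = false by apply/negP => /RL; rewrite /pos/=; lia.
    have -> : (yn p \in yn j :: sR) = false by apply/negP => /RR; rewrite /pos/=; lia.
    have -> : (xn p \in yn j :: sR) = false by apply/negP => /RR; rewrite /pos/=; lia.
    by rewrite !orbF; case: (xn p \in _).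
  split.
  + have Hm := inL j.+1 ltac:(lia). move: PL LL C; case/splitPl: Hm => s1 s2 Hl PL LL C.
    move/is_path_cat: PL => [P1 P2]. rewrite Hl in P2. rewrite last_cat Hl in LL.
    exists s1, sR. do 4 split => //.
    move=> U p Hp; rewrite /U. have := C p ltac:(lia).
    have N2 v : (pos k v <= j.+1)%N \/ (i < pos k v)%N -> v \notin s2.
      move=> Hv; apply/negP => H2. have := path_gt P2 H2.
      have Vj1 : valid k (xn j.+1) by rewrite /valid/ion/=; lia.
      have H3 : v \in xn j.+1 :: s2 by rewrite in_cons H2 orbT.
      have [_ _] := path_range P2 Vj1 H3. rewrite LL !posx. lia.
    rewrite -cat_cons !mem_cat (negbTE (N2 (xn p) _)); last by left; rewrite /pos/=; lia.
    rewrite (negbTE (N2 (yn p) _)) ?orbF //; right; rewrite /pos /=; lia.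
  + move=> m Hm. apply: (path_adj V0 PL); try (apply: inL; lia).
    by rewrite /pos /=; lia.
- move=> [[sL [sR [PL [LL [PR [LR C]]]]]] H].
  have RL v : v \in xn 0 :: sL -> (pos k v <= j.+1)%N.
    by move=> Hv; have [_ _ ] := path_range PL V0 Hv; rewrite LL.
  have RR v : v \in yn j :: sR -> (2*k+1-j <= pos k v)%N.
    by move=> Hv; have [_ H' _] := path_range PR Vj Hv; rewrite /pos /= in H'.
  exists (sL ++ chx j.+1 (i - j.+1)), sR. split.
    apply/is_path_cat; split => //; rewrite LL; exact: chx_path.
  split; first by rewrite last_cat LL chx_last; congr xn; lia.
  do 2 split => //.
  move=> U p Hp; rewrite /U -cat_cons !mem_cat chx_memx chx_memy orbF.
  case: (leqP p j.+1) => Hpj.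
    have := C p ltac:(lia). rewrite !mem_cat.
    by rewrite andFb orbF.
  rewrite andTb.
  have -> : (p <= j.+1 + (i - j.+1))%N = true by apply/idP; lia.
  rewrite orbT.
  have -> : (yn p \in xn 0 :: sL) = false by apply/negP => /RL; rewrite /pos/=; lia.
  have -> : (yn p \in yn j :: sR) = false by apply/negP => /RR; rewrite /pos/=; lia.
  by [].
Qed.

Lemma xnyn a b : (xn a == yn b) = false. Proof. by []. Qed.
Lemma ynyn a b : (yn a == yn b) = (a == b). Proof. by []. Qed.

Lemma Mlt i j : (i < j <= k)%N -> Mtab E i j <->
  Mtab E i i.+1 /\ (forall m, (m < j - i.+1)%N -> E (yn (j - m)) (yn (j - m - 1))).
Proof.
move=> Hij.
have Vj : valid k (yn j) by rewrite /valid/ion/=; lia.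
have Vi1 : valid k (yn i.+1) by rewrite /valid/ion/=; lia.
split.
- move=> [sL [sR [PL [LL [PR [LR C]]]]]].
  have RL v : v \in xn 0 :: sL -> (pos k v <= i)%N.
    by move=> Hv; have [_ _ ] := path_range PL V0 Hv; rewrite LL.
  have RR v : v \in yn j :: sR -> (2*k+1-j <= pos k v)%N.
    by move=> Hv; have [_ H _] := path_range PR Vj Hv; rewrite /pos /= in H.
  have inR p : (i < p <= j)%N -> yn p \in yn j :: sR.
    move=> Hp. have := C p ltac:(lia). rewrite !mem_cat.
    have -> : (yn p \in xn 0 :: sL) = false by apply/negP => /RL; rewrite /pos/=; lia.
    have -> : (xn p \in xn 0 :: sL) = false by apply/negP => /RL; rewrite /pos/=; lia.
    have -> : (xn p \in yn j :: sR) = false by apply/negP => /RR; rewrite /pos/=; lia.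
    by case: (yn p \in _).
  split.
  + have Hm := inR i.+1 ltac:(lia). move: PR LR C; case/splitPl: Hm => s1 s2 Hl PR LR C.
    move/is_path_cat: PR => [P1 P2]. rewrite Hl in P2. rewrite last_cat Hl in LR.
    exists sL, s2. do 4 split => //.
    move=> U p Hp; rewrite /U. have := C p ltac:(lia).
    have Ex : (xn p \in yn j :: s1) = false.
      apply/negP => H. have [_ H' _] := path_range P1 Vj H. rewrite posx posy in H'. lia.
    have Ey : (yn p \in yn j :: s1) = (yn p == yn i.+1).
      case: (p =P i.+1) => [->|ne].
        by rewrite eqxx -Hl mem_last.
      rewrite ynyn. have -> : (p == i.+1) = false by apply/eqP.
      apply/negP => H. have [_ _ H'] := path_range P1 Vj H. rewrite Hl !posy in H'. lia.
    rewrite -cat_cons !mem_cat Ex Ey.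
    by rewrite !(in_cons (yn i.+1)) xnyn.
  + move=> m Hm. apply: (path_adj Vj PR); try (apply: inR; lia).
    by rewrite !posy; lia.
- move=> [[sL [sR [PL [LL [PR [LR C]]]]]] H].
  have RL v : v \in xn 0 :: sL -> (pos k v <= i)%N.
    by move=> Hv; have [_ _ ] := path_range PL V0 Hv; rewrite LL.
  have RR v : v \in yn i.+1 :: sR -> (2*k+1-i.+1 <= pos k v)%N.
    by move=> Hv; have [_ H' _] := path_range PR Vi1 Hv; rewrite /pos /= in H'.
  have Ej : (j - (j - i.+1) = i.+1)%N by lia.
  exists sL, (chy j (j - i.+1) ++ sR). split => //.
  split => //.
  split. apply/is_path_cat; split; first by apply: chy_path => //; lia.
    by rewrite chy_last Ej.
  split; first by rewrite last_cat chy_last Ej.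
  move=> U p Hp; rewrite /U -cat_cons !mem_cat.
  have Ex : (xn p \in yn j :: chy j (j - i.+1)) = false by rewrite in_cons xnyn chy_memx.
  rewrite Ex.
  case: (leqP p i.+1) => Hpi.
    have Ey : (yn p \in yn j :: chy j (j - i.+1)) = (yn p == yn i.+1).
      rewrite in_cons chy_memy; last lia. rewrite !ynyn Ej.
      case: (p =P i.+1) => [->|ne]; first by apply/idP; lia.
      case: (p =P j) => [e|ne2]; first lia.
      apply/negbTE; lia.
    rewrite Ey. have := C p ltac:(lia).
    by rewrite !mem_cat !(in_cons (yn i.+1)) xnyn.
  have -> : (yn p \in yn j :: chy j (j - i.+1)) = true.
    rewrite in_cons chy_memy; last lia. rewrite ynyn Ej.
    case: (p =P j) => [e|ne2] //=. apply/idP; lia.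
  rewrite orbT.
  have -> : (xn p \in xn 0 :: sL) = false by apply/negP => /RL; rewrite /pos/=; lia.
  have -> : (xn p \in sR) = false.
    apply/negP => Hs. have : xn p \in yn i.+1 :: sR by rewrite in_cons Hs orbT.
    move/RR; rewrite posx; lia.
  by [].
Qed.

End Core.

Definition t0 : 'I_2 := @Ordinal 2 0 isT.
Definition t1 : 'I_2 := @Ordinal 2 1 isT.
Definition dnode (i j : nat) : node :=
  if (j < i)%N then xn j.+1 else if (i < j)%N then yn i.+1 else xn 0.
Definition lnode (i j : nat) : node :=
  if (j < i)%N then xn j.+1 else if (i < j)%N then yn j else xn 0.
Definition qq (k i j : nat) (t : 'I_2) : node :=
  if val t == 0%N then dnode i j else lnode i j.
Definition gg (k i j : nat) (l : 'I_2 -> nat) (d : 'I_2 -> bool) : bool :=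
  if (j < i)%N then d t0 && (i - j.+1 <= l t1)%N
  else if (i < j)%N then d t0 && (j - i.+1 <= l t1)%N
  else (i == 0%N).

Local Open Scope ring_scope.

Theorem lemma3 :
  exists (c : nat) (q : nat -> nat -> nat -> 'I_c -> node)
         (g : nat -> nat -> nat -> ('I_c -> nat) -> ('I_c -> bool) -> bool),
  forall (R : realType) (A : seq R) (W : R) (k : nat) (w : nat -> R)
         (cx cy : nat -> R),
    (forall r, r \in A -> 0 < r) ->
    cx 0%N = 0 -> cy 0%N = W - 18 ->
    (forall j, (1 <= j <= k)%N ->
       (cx j = w j - 1 /\ cy j = W - w j) \/ (cx j = W - w j /\ cy j = w j - 1)) ->
    (forall u v : node, valid k u -> valid k v -> (pos k u <= pos k v)%N ->
       cord cx cy u <= cord cx cy v) ->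
    forall (lce : node -> nat) (dia : node -> bool),
    (forall z, valid k z -> lce_spec (edge A k cx cy) k z (lce z)) ->
    (forall z, valid k z -> dia_spec (edge A k cx cy) z (dia z)) ->
    forall i j : nat, (i <= k)%N -> (j <= k)%N ->
      (forall t, valid k (q k i j t)) /\
      (Mtab (edge A k cx cy) i j <->
         g k i j (fun t => lce (q k i j t)) (fun t => dia (q k i j t)) = true).
Proof.
exists 2%N, qq, gg.
move=> R A W k w cx cy HA Hx0 Hy0 Hw Hmono lce dia Hlce Hdia i j Hi Hj.
set E := edge A k cx cy.
have HE : forall u v, E u v -> [/\ valid k u, valid k v & (pos k u < pos k v)%N].
  move=> u v [Vu [Vv [_ [Hlt _]]]]; split => //.
  rewrite ltnNge; apply/negP => Hle.
  have := Hmono v u Vv Vu Hle. by rewrite leNgt Hlt.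
split.
  move=> t; rewrite /qq /dnode /lnode /valid /ion.
  by case: (val t == 0%N); case: ltnP => H1; try case: ltnP => H2 /=; lia.
rewrite /gg /qq /= /dnode /lnode.
case: (ltnP j i) => Hji.
  rewrite (Mgt HE); last lia.
  have := Hdia (xn j.+1) ltac:(rewrite /valid/ion/=; lia).
  rewrite /dia_spec /= subn1 /= => HD.
  have := Hlce (xn j.+1) ltac:(rewrite /valid/ion/=; lia).
  rewrite /lce_spec /=. set n := lce (xn j.+1). move=> [Hn [Hch Hend]].
  split.
    move=> [HM Hc]. rewrite (proj2 HD HM) /=. apply/negPn/negP; rewrite -ltnNge => Hlt.
    case: Hend => [He|He]; first lia. apply: He. have := Hc n Hlt. by [].
  move=> /andP [Hd Hle]; split; first exact: (proj1 HD Hd).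
  move=> m Hm. apply: Hch; lia.
case: (ltnP i j) => Hij.
  rewrite (Mlt HE); last lia.
  have := Hdia (yn i.+1) ltac:(rewrite /valid/ion/=; lia).
  rewrite /dia_spec /= subn1 /= => HD.
  have := Hlce (yn j) ltac:(rewrite /valid/ion/=; lia).
  rewrite /lce_spec /=. set n := lce (yn j). move=> [Hn [Hch Hend]].
  split.
    move=> [HM Hc]. rewrite (proj2 HD HM) /=. apply/negPn/negP; rewrite -ltnNge => Hlt.
    case: Hend => [He|He]; first lia. apply: He. have := Hc n Hlt. by [].
  move=> /andP [Hd Hle]; split; first exact: (proj1 HD Hd).
  move=> m Hm. apply: Hch; lia.
have -> : j = i by lia.
case: i {Hji Hij Hi Hj} => [|i] /=.
  by split => // _; apply: M00.
split => // H; exfalso; exact: (Mii _ H).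
Qed.
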